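(* Let $(X,d)$ be a compact metric space, $\Lambda$ a finite nonempty set, and $\mathcal{F}=\{X; f_{\lambda}\mid\lambda\in\Lambda\}$ a parameterized iterated function system such that each $f_\lambda:X\to X$ is continuous and surjective. If $\mathcal{F}$ has the asymptotic average shadowing property, then $\mathcal{F}$ is chain transitive.
   Context: For $\sigma=\{\lambda_0,\lambda_1,\dots\}\in\Lambda^{\mathbb{Z}_+}$ write $\mathcal{F}_{\sigma_n}=f_{\lambda_{n-1}}\circ\cdots\circ f_{\lambda_0}$ ($\mathcal{F}_{\sigma_0}$ the identity). A sequence $\{x_i\}_{i\ge0}$ in $X$ is an asymptotic average pseudo-orbit of $\mathcal{F}$ if there is $\sigma=\{\lambda_0,\lambda_1,\dots\}\in\Lambda^{\mathbb{Z}_+}$ with $\lim_{n\to\infty}\frac1n\sum_{i=0}^{n-1}d(f_{\lambda_i}(x_i),x_{i+1})=0$; it is asymptotically shadowed in average by $z\in X$ if there is $\sigma\in\Lambda^{\mathbb{Z}_+}$ with $\lim_{n\to\infty}\frac1n\sum_{i=0}^{n-1}d(\mathcal{F}_{\sigma_i}(z),x_i)=0$. $\mathcal{F}$ has the asymptotic average shadowing property if every asymptotic average pseudo-orbit is asymptotically shadowed in average by some point of $X$. For $\delta>0$, a $\delta$-chain from $x$ to $y$ is a finite sequence $x=x_0,x_1,\dots,x_b=y$ in $X$ together with $\lambda_0,\dots,\lambda_{b-1}\in\Lambda$ such that $d(f_{\lambda_i}(x_i),x_{i+1})<\delta$ for all $0\le i<b$. $\mathcal{F}$ is chain transitive if for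 all $x,y\in X$ and every $\delta>0$ there is a $\delta$-chain of $\mathcal{F}$ from $x$ to $y$. *)

(* Defs.v *)
From Stdlib Require Import Reals List.
Open Scope R_scope.

Definition is_metric {X : Type} (d : X -> X -> R) : Prop :=
  (forall x y, 0 <= d x y) /\
  (forall x y, d x y = 0 <-> x = y) /\
  (forall x y, d x y = d y x) /\
  (forall x y z, d x z <= d x y + d y z).

Definition metric_open {X : Type} (d : X -> X -> R) (U : X -> Prop) : Prop :=
  forall x, U x -> exists eps, 0 < eps /\ forall y, d x y < eps -> U y.

Definition metric_compact {X : Type} (d : X -> X -> R) : Prop :=
  forall (I : Type) (U : I -> X -> Prop),
    (forall i, metric_open d (U i)) ->
    (forall x, exists i, U i x) ->
    exists l : list I, forall x, exists i, In i l /\ U i x.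

Definition metric_continuous {X : Type} (d : X -> X -> R) (f : X -> X) : Prop :=
  forall x eps, 0 < eps -> exists delta, 0 < delta /\
    forall y, d x y < delta -> d (f x) (f y) < eps.

Definition surjective {X : Type} (f : X -> X) : Prop := forall y, exists x, f x = y.

Definition finite_type (L : Type) : Prop := exists l : list L, forall a, In a l.

Fixpoint Fsig {X L : Type} (f : L -> X -> X) (sigma : nat -> L) (z : X) (n : nat) : X :=
  match n with
  | O => z
  | S m => f (sigma m) (Fsig f sigma z m)
  end.

(* lim_{n->oo} (1/n) sum_{i=0}^{n-1} u i = 0
   (indexed by n+1 >= 1; sum_f_R0 u n = u 0 + ... + u n). *)
Definition avg_to_zero (u : nat -> R) : Prop :=
  Un_cv (fun n => sum_f_R0 u n / INR (S n)) 0.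

Definition asymptotic_average_pseudo_orbit {X L : Type} (d : X -> X -> R)
    (f : L -> X -> X) (x : nat -> X) : Prop :=
  exists sigma : nat -> L, avg_to_zero (fun i => d (f (sigma i) (x i)) (x (S i))).

Definition asymptotically_shadowed_in_average {X L : Type} (d : X -> X -> R)
    (f : L -> X -> X) (x : nat -> X) (z : X) : Prop :=
  exists sigma : nat -> L, avg_to_zero (fun i => d (Fsig f sigma z i) (x i)).

Definition asymptotic_average_shadowing {X L : Type} (d : X -> X -> R)
    (f : L -> X -> X) : Prop :=
  forall x : nat -> X, asymptotic_average_pseudo_orbit d f x ->
    exists z, asymptotically_shadowed_in_average d f x z.

Definition delta_chain {X L : Type} (d : X -> X -> R) (f : L -> X -> X)
    (delta : R) (x y : X) : Prop :=
  exists (b : nat) (xs : nat -> X) (ls : nat -> L),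
    xs O = x /\ xs b = y /\
    forall i, (i < b)%nat -> d (f (ls i) (xs i)) (xs (S i)) < delta.

Definition chain_transitive {X L : Type} (d : X -> X -> R) (f : L -> X -> X) : Prop :=
  forall x y : X, forall delta, 0 < delta -> delta_chain d f delta x y.

(* Main.v *)
Require Import Defs.
From Stdlib Require Import Reals List Lia Lra Arith ZArith Psatz Classical ClassicalEpsilon.
Open Scope R_scope.

Lemma nat_unbounded (r : R) : exists n : nat, r < INR n.
Proof.
  destruct (archimed r) as [H1 _].
  destruct (Z_le_gt_dec 0 (up r)) as [Hz|Hz].
  - exists (Z.to_nat (up r)). rewrite INR_IZR_INZ, Z2Nat.id; [lra|lia].
  - exists 0%nat. simpl. assert (IZR (up r) < 0) by (apply IZR_lt; lia). lra.
Qed.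

Definition st_step (s : nat * nat) : nat * nat :=
  let (k, p) := s in if (p + 1 <? 2 ^ k)%nat then (k, (p + 1)%nat) else (S k, 0%nat).
Fixpoint st (n : nat) : nat * nat :=
  match n with O => (0%nat, 0%nat) | S m => st_step (st m) end.

Lemma st_inv n : (snd (st n) < 2 ^ fst (st n))%nat /\ S n = (2 ^ fst (st n) + snd (st n))%nat.
Proof.
  induction n as [|n IH]; [simpl; lia|].
  simpl. destruct (st n) as [k p]; simpl in *.
  pose proof (Nat.pow_nonzero 2 k ltac:(lia)).
  destruct (Nat.ltb_spec (p + 1) (2 ^ k)); simpl; lia.
Qed.

Lemma st_char t k p : (p < 2 ^ k)%nat -> S t = (2 ^ k + p)%nat -> st t = (k, p).
Proof.
  intros Hp Ht. destruct (st_inv t) as [H1 H2].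
  destruct (st t) as [k' p'] eqn:E; simpl in *.
  assert (k = k').
  { destruct (lt_eq_lt_dec k k') as [[Hl|Hl]|Hl]; auto.
    - pose proof (Nat.pow_le_mono_r 2 (S k) k' ltac:(lia) Hl). simpl in *. lia.
    - pose proof (Nat.pow_le_mono_r 2 (S k') k ltac:(lia) Hl). simpl in *. lia. }
  subst. f_equal. lia.
Qed.

Lemma st_S n : st (S n) = st_step (st n).
Proof. reflexivity. Qed.

Lemma pow_sq k : ((S k) * (S k) <= 4 * 2 ^ k)%nat.
Proof.
  induction k as [|k IH]; [simpl; lia|].
  destruct k as [|k]; [simpl; lia|].
  destruct k as [|k]; [simpl; lia|].
  change (2 ^ S (S (S k)))%nat with (2 * 2 ^ S (S k))%nat. nia.
Qed.

Lemma sum_ge (s : nat -> R) (delta : R) (a n : nat) :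
  (forall i, 0 <= s i) -> (forall i, (a <= i <= n)%nat -> delta <= s i) ->
  (a <= S n)%nat -> delta * INR (S n - a) <= sum_f_R0 s n.
Proof.
  intros H0 H. revert a H. induction n as [|n IH]; intros a H Ha.
  - simpl. destruct a as [|a].
    + simpl. rewrite Rmult_1_r. apply H. lia.
    + replace (1 - S a)%nat with 0%nat by lia. simpl. rewrite Rmult_0_r. apply H0.
  - simpl sum_f_R0. destruct (Nat.eq_dec a (S (S n))) as [->|Hne].
    + rewrite Nat.sub_diag. simpl INR. rewrite Rmult_0_r.
      assert (0 <= sum_f_R0 s n).
      { clear IH. induction n; simpl; [apply H0|]. pose proof (H0 (S n)). 
        assert (0 <= sum_f_R0 s n) by (apply IHn; intros; lia). lra. }
      pose proof (H0 (S n)). lra.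
    + assert (IH' := IH a (fun i Hi => H i ltac:(lia)) ltac:(lia)).
      replace (S (S n) - a)%nat with (S (S n - a)) by lia.
      rewrite S_INR. pose proof (H (S n) ltac:(lia)). lra.
Qed.

Lemma chain_exact {X L : Type} (d : X -> X -> R) (f : L -> X -> X) delta
  (Hm : is_metric d) (Hd : 0 < delta) (g : nat -> X) (ls : nat -> L) (b : nat) :
  (forall i, (i < b)%nat -> f (ls i) (g i) = g (S i)) -> delta_chain d f delta (g 0%nat) (g b).
Proof.
  intros H. exists b, g, ls. split; [reflexivity|split;[reflexivity|]].
  intros i Hi. rewrite H by exact Hi. destruct Hm as [_ [Hz _]].
  rewrite (proj2 (Hz _ _) eq_refl). exact Hd.
Qed.

Lemma chain_one {X L : Type} (d : X -> X -> R) (f : L -> X -> X) delta (l : L) u w :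
  d (f l u) w < delta -> delta_chain d f delta u w.
Proof.
  intros H. exists 1%nat, (fun i => match i with O => u | _ => w end), (fun _ => l).
  split; [reflexivity|split;[reflexivity|]].
  intros i Hi. destruct i; [exact H|lia].
Qed.

Lemma chain_trans {X L : Type} (d : X -> X -> R) (f : L -> X -> X) delta x w y :
  delta_chain d f delta x w -> delta_chain d f delta w y -> delta_chain d f delta x y.
Proof.
  intros [b1 [xs1 [ls1 [H1a [H1b H1c]]]]] [b2 [xs2 [ls2 [H2a [H2b H2c]]]]].
  exists (b1 + b2)%nat, (fun i => if (i <=? b1)%nat then xs1 i else xs2 (i - b1)%nat),
    (fun i => if (i <? b1)%nat then ls1 i else ls2 (i - b1)%nat).
  split; [simpl; exact H1a|split].
  - destruct (Nat.leb_spec (b1 + b2) b1).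
    + assert (b2 = 0%nat) by lia. subst b2. rewrite Nat.add_0_r. congruence.
    + replace (b1 + b2 - b1)%nat with b2 by lia. exact H2b.
  - intros i Hi. destruct (Nat.ltb_spec i b1).
    + rewrite (proj2 (Nat.leb_le i b1)) by lia.
      rewrite (proj2 (Nat.leb_le (S i) b1)) by lia. apply H1c; lia.
    + destruct (Nat.leb_spec i b1).
      * assert (i = b1) by lia. subst i. rewrite (proj2 (Nat.leb_gt (S b1) b1)) by lia.
        rewrite Nat.sub_diag, H1b, <- H2a. replace (S b1 - b1)%nat with 1%nat by lia.
        apply (H2c 0%nat); lia.
      * rewrite (proj2 (Nat.leb_gt (S i) b1)) by lia.
        replace (S i - b1)%nat with (S (i - b1)) by lia. apply H2c; lia.
Qed.

Lemma bounded {X : Type} (d : X -> X -> R) (Hm : is_metric d) (Hc : metric_compact d) (x0 : X) :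
  exists D, 0 <= D /\ forall u v, d u v <= D.
Proof.
  destruct Hm as [Hpos [Hz [Hsym Htri]]].
  destruct (Hc nat (fun n y => d x0 y < INR n)) as [l Hl].
  - intros n y Hy. exists (INR n - d x0 y). split; [lra|].
    intros w Hw. pose proof (Htri x0 y w). lra.
  - intros y. destruct (archimed (d x0 y)) as [H1 _].
    destruct (Z_le_gt_dec 0 (up (d x0 y))) as [Hz'|Hz'].
    + exists (Z.to_nat (up (d x0 y))). rewrite INR_IZR_INZ, Z2Nat.id; [lra|lia].
    + exfalso. assert (IZR (up (d x0 y)) < 0) by (apply IZR_lt; lia). pose proof (Hpos x0 y). lra.
  - set (B := INR (list_sum l)).
    assert (HB : forall y, d x0 y <= B).
    { intros y. destruct (Hl y) as [i [Hi Hy]].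
      assert (i <= list_sum l)%nat.
      { clear -Hi. induction l as [|a l IH]; simpl in *; [tauto|]. destruct Hi as [Hi|Hi]; [subst; lia|].
        specialize (IH Hi). lia. }
      apply le_INR in H. unfold B. lra. }
    exists (2 * B). split; [pose proof (HB x0); pose proof (Hpos x0 x0); lra|].
    intros u v. pose proof (Htri u x0 v). rewrite (Hsym u x0) in H. pose proof (HB u). pose proof (HB v). lra.
Qed.

Lemma sum_nonneg (s : nat -> R) n : (forall i, 0 <= s i) -> 0 <= sum_f_R0 s n.
Proof. intros H. induction n; simpl; [apply H|]. pose proof (H (S n)). lra. Qed.

Lemma avg_lemma (e : nat -> R) (kk : nat -> nat) (D : R) : 0 <= D ->
  (forall n, 0 <= e n) -> (forall n, sum_f_R0 e n <= D * INR (kk n)) ->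
  (forall n, (S (kk n) * S (kk n) <= 8 * S n)%nat) -> avg_to_zero e.
Proof.
  intros HD He Hs Hk eps Heps.
  destruct (nat_unbounded (8 * D * D / (eps * eps))) as [N HN].
  exists N. intros n Hn. unfold R_dist. rewrite Rminus_0_r.
  pose proof (sum_nonneg e n He) as Hs0.
  assert (Hq : 0 < INR (S n)) by (apply lt_0_INR; lia).
  assert (HqN : INR N <= INR (S n)) by (apply le_INR; lia).
  assert (HK := Hk n). apply le_INR in HK. rewrite !mult_INR in HK.
  rewrite (S_INR (kk n)) in HK.
  set (q := INR (S n)) in *. set (S0 := sum_f_R0 e n) in *.
  set (K := INR (kk n)) in *. simpl (INR 8) in HK.
  assert (HK0 : 0 <= K) by apply pos_INR.
  assert (Hsum := Hs n). fold S0 K in Hsum.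
  assert (Ha0 : 0 <= S0 / q) by (apply Rle_mult_inv_pos; lra).
  rewrite Rabs_right by lra.
  assert (Hsq : S0 * S0 <= 8 * D * D * q).
  { assert (S0 * S0 <= (D * K) * (D * K)) by (apply Rmult_le_compat; lra).
    assert (K * K <= 8 * q) by (simpl in HK; nra). nra. }
  assert (Hqe : 8 * D * D < eps * eps * q).
  { assert (0 < eps * eps) by nra.
    assert (8 * D * D / (eps * eps) < q) by lra.
    apply (Rmult_lt_compat_l (eps * eps)) in H0; [|lra].
    unfold Rdiv in H0. rewrite Rmult_comm, Rmult_assoc, Rinv_l in H0 by lra. lra. }
  apply Rnot_le_lt. intros Hae.
  assert (HS0 : S0 = (S0 / q) * q) by (field; lra).
  set (a := S0 / q) in *.
  assert (eps * q <= a * q) by (apply Rmult_le_compat_r; lra).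
  assert ((eps * q) * (eps * q) <= S0 * S0) by (rewrite HS0; apply Rmult_le_compat; nra).
  nra.
Qed.

Lemma dens (s : nat -> R) (delta : R) (N : nat) (b : bool) :
  0 < delta -> (forall i, 0 <= s i) -> avg_to_zero s ->
  exists t, (N <= t)%nat /\ Nat.even (fst (st t)) = b /\ (1 <= snd (st t))%nat /\ s t < delta.
Proof.
  intros Hd Hs0 Hav.
  destruct (classic (exists t, (N <= t)%nat /\ Nat.even (fst (st t)) = b /\ (1 <= snd (st t))%nat /\ s t < delta)) as [H|H]; [exact H|exfalso].
  assert (Hall : forall t, (N <= t)%nat -> Nat.even (fst (st t)) = b -> (1 <= snd (st t))%nat -> delta <= s t).
  { intros t H1 H2 H3. apply Rnot_lt_le. intros H4. apply H. exists t. tauto. }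
  destruct (Hav (delta / 4) ltac:(lra)) as [M HM].
  set (k := (2 * (N + M + 1) + (if b then 0 else 1))%nat).
  assert (Hev : Nat.even k = b).
  { unfold k. destruct b.
    - rewrite Nat.add_0_r. apply Nat.even_even.
    - rewrite Nat.add_1_r, Nat.even_succ. apply Nat.odd_even. }
  pose proof (Nat.pow_gt_lin_r 2 k ltac:(lia)) as HP.
  set (P := (2 ^ k)%nat) in *.
  set (q := (P - 1)%nat).
  assert (HPq : P = S q) by (unfold q; lia).
  assert (Hk : (k >= 2 * (N + M + 1))%nat) by (unfold k; lia).
  assert (Hblk : forall t, (P <= t <= q + q)%nat -> delta <= s t).
  { intros t Ht. assert (E : st t = (k, (t - q)%nat)) by (apply st_char; fold P; lia).
    apply Hall; try rewrite E; simpl; try lia; exact Hev. }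
  pose proof (sum_ge s delta P (q + q) Hs0 Hblk ltac:(lia)) as Hsum.
  replace (S (q + q) - P)%nat with q in Hsum by lia.
  specialize (HM (q + q)%nat ltac:(lia)). unfold R_dist in HM. rewrite Rminus_0_r in HM.
  pose proof (sum_nonneg s (q + q) Hs0).
  rewrite S_INR, plus_INR in HM.
  assert (Hq1 : 1 <= INR q) by (apply (le_INR 1); lia).
  set (S0 := sum_f_R0 s (q + q)) in *. set (Q := INR q) in *.
  rewrite Rabs_right in HM by (apply Rle_ge, Rle_mult_inv_pos; lra).
  assert (S0 < delta / 4 * (Q + Q + 1)).
  { apply (Rmult_lt_compat_r (Q + Q + 1)) in HM; [|lra].
    unfold Rdiv in HM. rewrite Rmult_assoc, Rinv_l in HM by lra. unfold Rdiv. lra. }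
  nra.
Qed.

Definition pxs {X : Type} (F gi : X -> X) (x y : X) (n : nat) : X :=
  if Nat.even (fst (st n)) then Nat.iter (snd (st n)) F x
  else Nat.iter (2 ^ fst (st n) - 1 - snd (st n))%nat gi y.

Lemma pxs_step {X : Type} (F gi : X -> X) x y (Hg : forall u, F (gi u) = u) n :
  (snd (st n) + 1 < 2 ^ fst (st n))%nat -> F (pxs F gi x y n) = pxs F gi x y (S n).
Proof.
  intros H. unfold pxs. rewrite st_S. destruct (st n) as [k p]; simpl in *.
  rewrite (proj2 (Nat.ltb_lt _ _) H). simpl.
  destruct (Nat.even k).
  - rewrite Nat.add_1_r. reflexivity.
  - replace (2 ^ k - 1 - p)%nat with (S (2 ^ k - 1 - (p + 1))) by lia. simpl. apply Hg.
Qed.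

Lemma st_cases n : (fst (st (S n)) = fst (st n) /\ (snd (st n) + 1 < 2 ^ fst (st n))%nat)
  \/ fst (st (S n)) = S (fst (st n)).
Proof.
  rewrite st_S. destruct (st n) as [k p]; simpl.
  destruct (Nat.ltb_spec (p + 1) (2 ^ k)); simpl; [left; split; auto|right; auto].
Qed.

Theorem mainTheorem4 (X L : Type) (d : X -> X -> R) (f : L -> X -> X)
  (Hmetric : is_metric d) (Hcompact : metric_compact d)
  (HLfin : finite_type L) (HLne : inhabited L)
  (Hcont : forall l, metric_continuous d (f l))
  (Hsurj : forall l, surjective (f l))
  (Haasp : asymptotic_average_shadowing d f) :
  chain_transitive d f.
Proof.
  intros x y delta Hd.
  destruct HLne as [l0].
  pose (gi := fun u => proj1_sig (constructive_indefinite_description _ (Hsurj l0 u))).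
  assert (Hg : forall u, f l0 (gi u) = u).
  { intros u. unfold gi. destruct (constructive_indefinite_description _ _). simpl. exact e. }
  destruct (bounded d Hmetric Hcompact x) as [D [HD0 HD]].
  pose proof Hmetric as [Hpos [Hz [Hsym Htri]]].
  set (xs := pxs (f l0) gi x y).
  assert (Hpo : asymptotic_average_pseudo_orbit d f xs).
  { exists (fun _ => l0).
    apply (avg_lemma _ (fun n => fst (st (S n))) D HD0).
    - intros; apply Hpos.
    - intros n. induction n as [|n IH].
      + simpl. rewrite Rmult_1_r. apply HD.
      + simpl sum_f_R0. destruct (st_cases (S n)) as [[E1 E2]|E1].
        * rewrite E1. unfold xs. rewrite pxs_step by auto.
          rewrite (proj2 (Hz _ _) eq_refl). unfold xs in IH. lra.
        * rewrite E1, S_INR. pose proof (HD (f l0 (xs (S n))) (xs (S (S n)))). lra.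
    - intros n. destruct (st_inv (S n)) as [_ H2].
      pose proof (pow_sq (fst (st (S n)))). lia. }
  destruct (Haasp xs Hpo) as [z [sig Hsh]].
  set (G := Fsig f sig z) in *.
  assert (Hs0 : forall i, 0 <= d (G i) (xs i)) by (intros; apply Hpos).
  destruct (dens _ delta 0 true Hd Hs0 Hsh) as [t [_ [Ht1 [Ht2 Ht3]]]].
  destruct (dens _ delta (S t) false Hd Hs0 Hsh) as [j [Hj0 [Hj1 [_ Hj3]]]].
  assert (C1 : delta_chain d f delta x (G t)).
  { set (p := snd (st t)) in *.
    apply (chain_trans d f delta x (Nat.iter (p - 1) (f l0) x) (G t)).
    - apply (chain_exact d f delta Hmetric Hd (fun i => Nat.iter i (f l0) x) (fun _ => l0)).
      intros i _. reflexivity.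
    - apply (chain_one d f delta l0).
      change (f l0 (Nat.iter (p - 1) (f l0) x)) with (Nat.iter (S (p - 1)) (f l0) x).
      replace (S (p - 1)) with p by lia.
      assert (E : xs t = Nat.iter p (f l0) x) by (unfold xs, pxs; rewrite Ht1; reflexivity).
      rewrite <- E, Hsym. exact Ht3. }
  assert (C2 : delta_chain d f delta (G t) (xs j)).
  { apply (chain_trans d f delta (G t) (G (j - 1)%nat) (xs j)).
    - assert (HC := chain_exact d f delta Hmetric Hd (fun i => G (t + i)%nat)
          (fun i => sig (t + i)%nat) (j - 1 - t)%nat).
      cbv beta in HC. rewrite Nat.add_0_r in HC.
      replace (t + (j - 1 - t))%nat with (j - 1)%nat in HC by lia.
      apply HC. intros i _. replace (t + S i)%nat with (S (t + i)) by lia. reflexivity.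
    - apply (chain_one d f delta (sig (j - 1)%nat)).
      change (f (sig (j - 1)%nat) (G (j - 1)%nat)) with (G (S (j - 1))).
      replace (S (j - 1)) with j by lia. exact Hj3. }
  assert (C3 : delta_chain d f delta (xs j) y).
  { set (m := (2 ^ fst (st j) - 1 - snd (st j))%nat).
    assert (E : xs j = Nat.iter m gi y) by (unfold xs, pxs; rewrite Hj1; reflexivity).
    rewrite E.
    assert (HC := chain_exact d f delta Hmetric Hd (fun i => Nat.iter (m - i) gi y)
          (fun _ => l0) m).
    cbv beta in HC. rewrite Nat.sub_0_r, Nat.sub_diag in HC. simpl in HC.
    apply HC.
    intros i Hi. simpl. replace (m - i)%nat with (S (m - S i)) by lia. simpl. apply Hg. }
  exact (chain_trans _ _ _ _ _ _ (chain_trans _ _ _ _ _ _ C1 C2) C3).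
Qed.
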